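(* Let $D$ be a 2-connected rooted digraph with root $r$. Then there exists a spanning subdigraph $A$ of $D$ which is acyclic, in which every vertex is reachable from $r$ by a directed path, and which contains at least half of the arcs of $D-r$ (the arcs of $D$ not incident to $r$).
   Context: A rooted digraph is a loopless digraph $D$ with a distinguished vertex $r$ (the root) such that: there is no arc $(u,r)$ for any $u\in V(D)$; there is no arc $(x,y)$ with $x\neq r$ and $y$ an outneighbour of $r$; and $r$ has outdegree at least 2. A cut of a rooted digraph $D$ is a set $S\subseteq V(D)\setminus\{r\}$ such that some vertex $z\notin S$ is not the endpoint of any directed path starting at $r$ in $D-S$. $D$ is 2-connected if it has no cut of size at most 1. *)

(* Defs.v *)
From mathcomp Require Import all_boot.
Set Implicit Arguments. Unset Strict Implicit. Unset Printing Implicit Defensive.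

(* A digraph on a finite vertex type T is an arc relation E : rel T
   (simple digraph: at most one arc (x,y) for each ordered pair). *)

Definition loopless (T : finType) (E : rel T) : Prop := forall x, ~~ E x x.

Definition rooted_digraph (T : finType) (E : rel T) (r : T) : Prop :=
  [/\ loopless E,
      (forall u, ~~ E u r),
      (forall x y, x != r -> E r y -> ~~ E x y)
    & 2 <= #|[set y | E r y]|].

Definition del_rel (T : finType) (E : rel T) (S : {set T}) : rel T :=
  [rel x y | [&& E x y, x \notin S & y \notin S]].

Definition is_cut (T : finType) (E : rel T) (r : T) (S : {set T}) : Prop :=
  r \notin S /\ exists z, z \notin S /\ ~~ connect (del_rel E S) r z.

Definition two_connected (T : finType) (E : rel T) (r : T) : Prop :=
  forall S : {set T}, #|S| <= 1 -> ~ is_cut E r S.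

Definition subrel_of (T : finType) (F E : rel T) : Prop :=
  forall x y, F x y -> E x y.

Definition acyclic (T : finType) (F : rel T) : Prop :=
  forall x y, F x y -> ~~ connect F y x.

Definition arcs_avoiding (T : finType) (F : rel T) (r : T) : {set T * T} :=
  [set p : T * T | [&& F p.1 p.2, p.1 != r & p.2 != r]].

(* Main.v *)
Require Import Defs.
From mathcomp Require Import all_boot zify.
Set Implicit Arguments. Unset Strict Implicit. Unset Printing Implicit Defensive.

Section Helpers.
Variable T : finType.

Definition inrel (E : rel T) (W : {set T}) : rel T :=
  [rel u v | [&& E u v, u \in W & v \in W]].

Lemma connect_fwd (e : rel T) (a : T) (P : T -> Prop) :
  P a -> (forall u w, connect e a u -> P u -> e u w -> P w) ->
  forall v, connect e a v -> P v.
Proof.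
move=> Pa step v /connectP [s pth ->].
suff H : forall s b, connect e a b -> P b -> path e b s -> P (last b s).
  by apply: H => //; apply: connect0.
elim=> [|z s' IH] b Hab Pb //=.
case/andP=> ebz pz; apply: IH => //.
  by apply: connect_trans Hab (connect1 ebz).
by apply: step ebz.
Qed.

Lemma inrel_mono (E : rel T) (W1 W2 : {set T}) a b : W1 \subset W2 ->
  connect (inrel E W1) a b -> connect (inrel E W2) a b.
Proof.
move=> sub; apply: connect_sub => u w /and3P [Euw uW wW].
by apply: connect1; apply/and3P; split; [ | apply: (subsetP sub) | apply: (subsetP sub)].
Qed.

Lemma split_conn (E : rel T) (W : {set T}) x a v : connect (inrel E W) a v ->
  connect (inrel E (W :\ x)) a v \/
  (connect (inrel E W) a x /\ connect (inrel E W) x v).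
Proof.
move: v; apply: (@connect_fwd _ a (fun v => connect (inrel E (W :\ x)) a v \/
  (connect (inrel E W) a x /\ connect (inrel E W) x v))); first by left; apply: connect0.
move=> u w Hau [L|[R1 R2]] euw; last first.
  by right; split=> //; apply: connect_trans R2 (connect1 euw).
case: (eqVneq w x) => [wx|wx]; first rewrite -wx.
  by right; split; [apply: connect_trans Hau (connect1 euw) |apply: connect0].
case: (eqVneq u x) => [ux|ux].
  right; split; last by rewrite -ux; apply: connect1.
  by rewrite -ux; apply: inrel_mono L; apply: subsetDl.
left; apply: connect_trans L (connect1 _).
by case/and3P: euw => e1 e2 e3; apply/and3P; split; rewrite // !in_setD1 ?e2 ?e3 ?ux ?wx.
Qed.

Lemma first_visit (E : rel T) (W : {set T}) x a : a != x -> connect (inrel E W) a x ->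
  exists2 p, p != x & (connect (inrel E (W :\ x)) a p /\ inrel E W p x).
Proof.
move=> ax H.
have K : forall v, connect (inrel E W) a v -> (v != x /\ connect (inrel E (W :\ x)) a v) \/
  exists2 p, p != x & (connect (inrel E (W :\ x)) a p /\ inrel E W p x).
  apply: connect_fwd; first by left; split=> //; apply: connect0.
  move=> u w _ [[ux L]|R] euw; last by right.
  case: (eqVneq w x) => [wx|wx].
    by right; exists u => //; split=> //; rewrite -wx.
  left; split=> //; apply: connect_trans L (connect1 _).
  by case/and3P: euw => e1 e2 e3; apply/and3P; split; rewrite // !in_setD1 ?e2 ?e3 ?ux ?wx.
by case: (K x H) => [[]|//]; rewrite eqxx.
Qed.

Lemma crossing (e : rel T) a v (Q : {set T}) : connect e a v -> a \notin Q ->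
  v \in Q -> exists p z, [/\ e p z, p \notin Q & z \in Q].
Proof.
move=> H aQ; move: v H; apply: (@connect_fwd _ a (fun v => v \in Q -> exists p z, [/\ e p z, p \notin Q & z \in Q])).
  by move=> aQ'; rewrite aQ' in aQ.
move=> u w _ IH euw wQ; case: (boolP (u \in Q)) => uQ; first by apply: IH.
by exists u, w.
Qed.

End Helpers.

Lemma conn_mem (T : finType) (E : rel T) (W : {set T}) a q :
  connect (inrel E W) a q -> (q == a) || (q \in W).
Proof.
move: q; apply: (@connect_fwd _ _ a (fun q => (q == a) || (q \in W))); first by rewrite eqxx.
by move=> u w _ _ /and3P [_ _ ->]; rewrite orbT.
Qed.

Section Peel.
Variable T : finType.
Variable E : rel T.
Variable r : T.

Definition inv_a (S : {set T}) := forall v, v \in S -> connect (inrel E (r |: S)) r v.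
Definition inv_c (S : {set T}) := forall s v, s \in S -> v \in S -> v != s ->
  connect (inrel E (r |: (S :\ s))) r v \/
  exists2 b, b \notin S & connect (inrel E [set~ s]) b v.

Definition good_f (S : {set T}) (f : T -> nat) :=
  [/\ (forall v, v \in S -> 0 < f v <= #|S|), {in S &, injective f},
      (forall v, v \in S -> exists u, E u v && ((u == r) || ((u \in S) && (f u < f v))))
    & (forall v, v \in S -> exists w, E w v && ((w \notin S) || (f v < f w)))].

Lemma find_x (S : {set T}) : r \notin S -> inv_a S -> inv_c S -> S != set0 ->
  exists x, [/\ x \in S, (exists2 b, b \notin S & E b x) &
     forall v, v \in S :\ x -> connect (inrel E (r |: (S :\ x))) r v].
Proof.
move=> rS Ha Hc /set0Pn [v0 v0S].
pose X := [set x in S | [exists b, (b \notin S) && E b x]].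
pose Dx x := [set v in S | (v != x) && ~~ connect (inrel E (r |: (S :\ x))) r v].
have [x0 x0X] : exists x, x \in X.
  have [p [z [pz pS zS]]] := crossing (Ha _ v0S) rS v0S.
  exists z; rewrite inE zS /=; apply/existsP; exists p.
  by case/and3P: pz => ->; rewrite pS.
have good : forall m x, x \in X -> #|Dx x| <= m -> exists2 y, y \in X & Dx y = set0.
  elim=> [|m IHm] x xX.
    by rewrite leqn0 => /eqP/cards0_eq D0; exists x.
  move=> cD.
  case: (set_0Vmem (Dx x)) => [D0|[v vD]]; first by exists x.
  have xS : x \in S by move: xX; rewrite inE => /andP [].
  move: (vD); rewrite inE => /and3P [vS vx nc].
  case: (Hc x v xS vS vx) => [c|[b bS cb]]; first by rewrite c in nc.
  have bD : b \notin Dx x by rewrite inE (negbTE bS).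
  have [p [z [pz pD zD]]] := crossing cb bD vD.
  move: pz => /and3P [Epz]; rewrite !inE => px zx.
  move: (zD); rewrite inE => /and3P [zS zx' ncz].
  have zX : z \in X.
    case: (boolP (p \in S)) => pS.
      move: pD; rewrite inE pS px /= negbK => cp.
      have : connect (inrel E (r |: (S :\ x))) r z.
        apply: connect_trans cp (connect1 _).
        by apply/and3P; split; rewrite // !inE ?pS ?zS ?px ?zx' ?orbT.
      by rewrite (negbTE ncz).
    by rewrite inE zS /=; apply/existsP; exists p; rewrite pS Epz.
  apply: (IHm z zX).
  have sub : Dx z \subset Dx x :\ z.
    apply/subsetP => u; rewrite !inE => /and3P [uS uz ncu].
    rewrite uz uS /=.
    apply/andP; split.
      apply/eqP => ux; move: ncu; rewrite ux; apply/negP; rewrite negbK.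
      have rx : r != x by apply/eqP => rx; rewrite rx xS in rS.
      have [q qx [cq Eqx]] := first_visit rx (Ha x xS).
      case: (split_conn z cq) => [c2|[c2 _]]; last first.
        have : connect (inrel E (r |: (S :\ x))) r z.
          apply: inrel_mono c2; apply/subsetP => y; rewrite !inE.
          by case: (y == r); case: (y == x); case: (y == z); case: (y \in S).
        by rewrite (negbTE ncz).
      apply: connect_trans (inrel_mono _ c2) (connect1 _).
        apply/subsetP => y; rewrite !inE.
        by case: (y == r); case: (y == x); case: (y == z); case: (y \in S).
      move: Eqx => /and3P [Eqx qW _]; apply/and3P; split=> //.
        move: (conn_mem c2); rewrite !inE.
        by case: (q == r); case: (q == x); case: (q == z); case: (q \in S).
      by rewrite !inE xS andbT (eq_sym x z) zx' orbT.
    apply/negP => cu.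
    case: (split_conn z cu) => [c2|[c2 _]]; last by rewrite c2 in ncz.
    move: ncu; rewrite (_ : connect _ r u = true) //.
    apply: inrel_mono c2; apply/subsetP => y; rewrite !inE.
    by case: (y == r); case: (y == x); case: (y == z); case: (y \in S).
  apply: leq_trans (subset_leq_card sub) _.
  move: cD; rewrite (cardsD1 z (Dx x)) zD add1n ltnS.
  by [].
have [y yX y0] := good #|Dx x0| x0 x0X (leqnn _).
move: yX; rewrite inE => /andP [yS /existsP [b /andP [bS Eby]]].
exists y; split=> //; first by exists b.
move=> v; rewrite !inE => /andP [vy vS].
apply/negPn/negP => nc.
have : v \in Dx y by rewrite inE vS vy nc.
by rewrite y0 inE.
Qed.


Lemma peel n : forall S : {set T}, #|S| = n -> r \notin S -> inv_a S -> inv_c S ->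
  exists f, good_f S f.
Proof.
elim: n => [|n IH] S cS rS Ha Hc.
  move/cards0_eq: cS => ->; exists (fun _ => 0); split; by move=> ?; rewrite inE.
have S0 : S != set0 by apply/eqP => S0; rewrite S0 cards0 in cS.
have [x [xS [b bS Ebx] Hx]] := find_x rS Ha Hc S0.
have cS' : #|S :\ x| = n by move: cS; rewrite (cardsD1 x S) xS add1n => -[].
have rS' : r \notin S :\ x by rewrite inE (negbTE rS) andbF.
have rx : r != x by apply/eqP => rx; rewrite rx xS in rS.
have Ha' : inv_a (S :\ x) by [].
have Hc' : inv_c (S :\ x).
  move=> s v; rewrite !inE => /andP [sx sS] /andP [vx vS] vs.
  case: (Hc s v sS vS vs) => [c|[b' b'S cb']].
    case: (split_conn x c) => [c2|[_ c2]].
      left; apply: inrel_mono c2; apply/subsetP => y; rewrite !inE.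
      by case: (y == r); case: (y == x); case: (y == s); case: (y \in S).
    right; exists x; first by rewrite !inE eqxx.
    apply: inrel_mono c2; apply/subsetP => y; rewrite !inE.
    have rs : r != s by apply/eqP => rs; rewrite rs sS in rS.
    by move: rs; case: (y == r) /eqP; case: (y == x); case: (y == s) /eqP => // -> ->; rewrite eqxx.
  right; exists b' => //; rewrite !inE negb_and negbK; by rewrite (negbTE b'S) orbT.
have [f' [f1 f2 f3 f4]] := IH _ cS' rS' Ha' Hc'.
pose f := fun y => if y == x then n.+1 else f' y.
have fx : f x = n.+1 by rewrite /f eqxx.
have fo : forall y, y != x -> f y = f' y by move=> y yx; rewrite /f (negbTE yx).
exists f; split.
- move=> v vS; case: (eqVneq v x) => [->|vx]; first by rewrite fx cS /= leqnn.
  have vS' : v \in S :\ x by rewrite !inE vx.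
  by have /andP [h1 h2] := f1 v vS'; rewrite fo // h1 cS /= -cS' ltnW.
- move=> u v uS vS.
  case: (eqVneq u x) => [->|ux]; case: (eqVneq v x) => [->|vx] //.
  + have vS' : v \in S :\ x by rewrite !inE vx.
    by have /andP [_ h2] := f1 v vS'; rewrite fx fo // => e; rewrite -e cS' ltnn in h2.
  + have uS' : u \in S :\ x by rewrite !inE ux.
    by have /andP [_ h2] := f1 u uS'; rewrite fx fo // => e; rewrite e cS' ltnn in h2.
  + by rewrite !fo // => e; apply: f2; rewrite ?inE ?ux ?vx.
- move=> v vS; case: (eqVneq v x) => [->|vx].
  + have [q qx [cq Eqx]] := first_visit rx (Ha x xS).
    move: Eqx => /and3P [Eqx qW _].
    exists q; rewrite Eqx /=; move: qW; rewrite !inE => /orP [->//|qS].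
    have qS' : q \in S :\ x by rewrite !inE qx.
    by have /andP [_ h2] := f1 q qS'; rewrite qS fx fo // /= ltnS -cS' h2 orbT.
  + have vS' : v \in S :\ x by rewrite !inE vx.
    have [u /andP [Euv H]] := f3 v vS'; exists u; rewrite Euv /=.
    move: H; case/orP => [->//|/andP []]; rewrite inE => /andP [ux uS] h.
    by rewrite !fo ?uS ?h ?orbT //; move: ux; rewrite inE.
- move=> v vS; case: (eqVneq v x) => [->|vx].
  + by exists b; rewrite Ebx bS.
  + have vS' : v \in S :\ x by rewrite !inE vx.
    have [w /andP [Ewv H]] := f4 v vS'; exists w; rewrite Ewv /=.
    case: (eqVneq w x) => [->|wx].
      have /andP [_ h2] := f1 v vS'; by rewrite fx fo // ltnS -cS' h2 orbT.
    move: H; rewrite !inE wx /= => /orP [->//|h]; by rewrite !fo // h orbT.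
Qed.
End Peel.

Lemma rank_acyclic (T : finType) (R : rel T) (h : T -> nat) :
  (forall u v, R u v -> h u < h v) -> acyclic R.
Proof.
move=> Hh x y Rxy; apply/negP => c.
have : h y <= h x.
  move: x c {Rxy}; apply: (@connect_fwd _ _ y (fun u => h y <= h u)) => //.
  by move=> u w _ le Ruw; apply: leq_trans le (ltnW (Hh _ _ Ruw)).
by rewrite leqNgt (Hh _ _ Rxy).
Qed.

Lemma rank_reach (T : finType) (R : rel T) (h : T -> nat) r :
  (forall v, v != r -> exists u, R u v && (h u < h v)) -> forall v, connect R r v.
Proof.
move=> Hh v.
suff K : forall n v, h v < n -> connect R r v by apply: (K (h v).+1).
elim=> [|n IH] w //; case: (eqVneq w r) => [->|wr]; first by rewrite connect0.
move=> hw; have [u /andP [Ruw hu]] := Hh w wr.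
apply: connect_trans (IH u _) (connect1 Ruw); apply: leq_trans hu _; by [].
Qed.

Lemma del_inrel (T : finType) (E : rel T) (Z : {set T}) : del_rel E Z =2 inrel E (~: Z).
Proof. by move=> x y; rewrite /del_rel /inrel /= !inE. Qed.

Theorem corollary1 (T : finType) (E : rel T) (r : T) :
  rooted_digraph E r -> two_connected E r ->
  exists A : rel T,
    [/\ subrel_of A E,
        acyclic A,
        (forall v : T, connect A r v)
      & #|arcs_avoiding E r| <= 2 * #|arcs_avoiding A r|].
Proof.
case=> loopl noin _ _ H2.
have conn : forall Z : {set T}, #|Z| <= 1 -> r \notin Z -> forall z, z \notin Z ->
    connect (inrel E (~: Z)) r z.
  move=> Z cZ rZ z zZ; rewrite -(eq_connect (del_inrel E Z)).
  apply/negPn/negP => nc; apply: (H2 Z cZ); split=> //; exists z; split=> //.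
pose S0 := [set v | v != r].
have rS0 : r \notin S0 by rewrite inE eqxx.
have Ha : inv_a E r S0.
  move=> v vS; have := conn set0; rewrite cards0 => /(_ isT).
  rewrite inE => /(_ isT v); rewrite inE => /(_ isT) c.
  apply: inrel_mono c; apply/subsetP => y; rewrite !inE; by case: (y == r).
have Hc : inv_c E r S0.
  move=> s v; rewrite !inE => sr vr vs; right; exists r => //.
  apply: conn; rewrite ?cards1 ?inE //; by rewrite eq_sym.
have [f [f1 f2 f3 f4]] := peel (erefl #|S0|) rS0 Ha Hc.
pose N := #|T|.
have fN : forall v, v != r -> 0 < f v <= N.
  move=> v vr; have vS : v \in S0 by rewrite inE.
  have /andP [-> h] := f1 v vS.
  by apply: leq_trans h (max_card _).
pose h1 v := if v == r then 0 else f v.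
pose h2 v := if v == r then 0 else N.+1 - f v.
pose F := [rel u v | E u v && (h1 u < h1 v)].
pose B := [rel u v | E u v && (h2 u < h2 v)].
have accF : acyclic F by apply: (@rank_acyclic _ _ h1) => u v /andP [].
have accB : acyclic B by apply: (@rank_acyclic _ _ h2) => u v /andP [].
have reachF : forall v, connect F r v.
  apply: (@rank_reach _ _ h1) => v vr.
  have vS : v \in S0 by rewrite inE.
  have [u /andP [Euv H]] := f3 v vS.
  have hv : h1 v = f v by rewrite /h1 (negbTE vr).
  have /andP [fv _] := fN v vr.
  exists u; rewrite /= Euv /= andbb.
  case: (eqVneq u r) H => [->|ur] /= H; first by rewrite /h1 eqxx (negbTE vr).
  by rewrite /h1 (negbTE ur) (negbTE vr); move: H; rewrite inE ur.
have reachB : forall v, connect B r v.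
  apply: (@rank_reach _ _ h2) => v vr.
  have vS : v \in S0 by rewrite inE.
  have [w /andP [Ewv H]] := f4 v vS.
  have hv : h2 v = N.+1 - f v by rewrite /h2 (negbTE vr).
  have /andP [fv fvN] := fN v vr.
  exists w; rewrite /= Ewv /= andbb.
  case: (eqVneq w r) H => [->|wr] /= H; first by rewrite /h2 eqxx (negbTE vr); lia.
  have /andP [_ fwN] := fN w wr.
  move: H; rewrite inE wr /= => H.
  rewrite /h2 (negbTE wr) (negbTE vr); lia.
have sub : arcs_avoiding E r \subset arcs_avoiding F r :|: arcs_avoiding B r.
  apply/subsetP => -[u v]; rewrite !inE /= => /and3P [Euv ur vr].
  have uv : u != v by apply/eqP => uv; move: (loopl u); rewrite {2}uv Euv.
  have fuv : f u != f v.
    apply/eqP => e; move/eqP: uv; apply; apply: f2; by rewrite ?inE.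
  have /andP [_ fuN] := fN u ur; have /andP [_ fvN] := fN v vr.
  rewrite /h1 /h2 (negbTE ur) (negbTE vr) /= Euv !andbT /=.
  move: fuv; case: ltngtP => // h _; lia.
have cnt : #|arcs_avoiding E r| <= #|arcs_avoiding F r| + #|arcs_avoiding B r|.
  by apply: leq_trans (subset_leq_card sub) _; rewrite cardsU leq_subr.
case: (leqP #|arcs_avoiding B r| #|arcs_avoiding F r|) => hc.
  exists F; split=> //; first by move=> u v /andP [].
  lia.
exists B; split=> //; first by move=> u v /andP [].
lia.
Qed.
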